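(* In the setting described in the context, let $U_0,\dots,U_d$ be one of the six decompositions below, with $U_{-1}=U_{d+1}=0$ and empty sums equal to $0$. Then for $0\le i\le d$: $[0D]$: $(K^*-q^{d-2i}I)U_i\subseteq U_{i-1}$ and $(K^{*-1}-q^{2i-d}I)U_i\subseteq U_0+\cdots+U_{i-1}$; $[0^*D^*]$: $(K^*-q^{d-2i}I)U_i\subseteq U_{i+1}+\cdots+U_d$ and $(K^{*-1}-q^{2i-d}I)U_i\subseteq U_{i+1}$; $[0^*D]$: $K^*U_i\subseteq U_{i-1}+\cdots+U_d$ and $K^{*-1}U_i\subseteq U_0+\cdots+U_{i+1}$; $[0^*0]$: $(K^*-q^{2i-d}I)U_i\subseteq U_{i+1}+\cdots+U_d$ and $(K^{*-1}-q^{d-2i}I)U_i\subseteq U_{i+1}$; $[D^*0]$: $(K^*-q^{2i-d}I)U_i=0$ and $(K^{*-1}-q^{d-2i}I)U_i=0$; $[D^*D]$: $(K^*-q^{2i-d}I)U_i\subseteq U_{i-1}$ and $(K^{*-1}-q^{d-2i}I)U_i\subseteq U_0+\cdots+U_{i-1}$.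
   Context: $\mathbb K$ is an algebraically closed field, $q\in\mathbb K$ nonzero and not a root of unity, $V$ a nonzero finite-dimensional $\mathbb K$-vector space. A tridiagonal pair on $V$ is an ordered pair $A,A^*$ of linear maps $V\to V$ such that: (i) each of $A,A^*$ is diagonalizable; (ii) there is an ordering $V_0,\dots,V_d$ of the eigenspaces of $A$ with $A^*V_i\subseteq V_{i-1}+V_i+V_{i+1}$ ($V_{-1}=V_{d+1}=0$); (iii) there is an ordering $V^*_0,\dots,V^*_\delta$ of the eigenspaces of $A^*$ with $AV^*_i\subseteq V^*_{i-1}+V^*_i+V^*_{i+1}$ ($V^*_{-1}=V^*_{\delta+1}=0$); (iv) no subspace $W\ne0,V$ satisfies $AW\subseteq W$, $A^*W\subseteq W$. It is known $d=\delta$; orderings as in (ii),(iii) are called standard. Setting: $A,A^*$ is a tridiagonal pair on $V$; $V_0,\dots,V_d$ (resp. $V^*_0,\dots,V^*_d$) is a standard ordering of the eigenspaces of $A$ (resp. $A^*$); the eigenvalue of $A$ on $V_i$ is $aq^{2i-d}$ and that of $A^*$ on $V^*_i$ is $a^*q^{d-2i}$ for some nonzero $a,a^*\in\mathbb K$. The six decompositions of $V$ (sequences of nonzero subspaces whose sum is direct and equals $V$) are, for $0\le i\le d$: $[0D]$: $U_i=V_i$; $[0^*D^*]$: $U_i=V^*_i$; $[0^*D]$: $U_i=(V^*_0+\cdots+V^*_i)\cap(V_i+\cdots+V_d)$; $[0^*0]$: $U_i=(V^*_0+\cdots+V^*_i)\cap(V_0+\cdots+V_{d-i})$; $[D^*0]$: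 $U_i=(V^*_{d-i}+\cdots+V^*_d)\cap(V_0+\cdots+V_{d-i})$; $[D^*D]$: $U_i=(V^*_{d-i}+\cdots+V^*_d)\cap(V_i+\cdots+V_d)$. $K^*:V\to V$ is the linear map acting as $q^{2i-d}I$ on the $i$th subspace of $[D^*0]$ for each $i$. *)

(* Defs.v *)
From HB Require Import structures.
From mathcomp Require Import all_boot all_order all_algebra.
Set Implicit Arguments. Unset Strict Implicit. Unset Printing Implicit Defensive.
Import Order.TTheory GRing.Theory Num.Theory.
Local Open Scope ring_scope.
Local Open Scope vspace_scope.

Section TD.
Variables (K : fieldType) (V : vectType K).

Definition is_eigenspace (f : 'End(V)) (W : {vspace V}) : Prop :=
  exists th : K, W = passmx.leigenspace f th /\ W != 0%VS.

Definition diagonalizable (f : 'End(V)) : Prop :=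
  exists s : seq K, (\sum_(th <- s) passmx.leigenspace f th)%VS = fullv.

(* V_{i-1} + V_i + V_{i+1} with V_{-1} = V_{d+1} = 0 *)
Definition tri_sum (d : nat) (Vs : nat -> {vspace V}) (i : nat) : {vspace V} :=
  (\sum_(j < d.+1 | (i <= j.+1)%N && (j <= i.+1)%N) Vs j)%VS.

Definition standard_ordering (f g : 'End(V)) (d : nat) (Vs : nat -> {vspace V})
  : Prop :=
  [/\ (forall i, (i <= d)%N -> is_eigenspace f (Vs i)),
      (forall i j, (i <= d)%N -> (j <= d)%N -> Vs i = Vs j -> i = j),
      (forall W, is_eigenspace f W -> exists2 i, (i <= d)%N & W = Vs i) &
      (forall i, (i <= d)%N -> (g @: Vs i <= tri_sum d Vs i)%VS)].

Definition TD_pair (A As : 'End(V)) : Prop :=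
  fullv != (0 : {vspace V})%VS /\
  [/\ diagonalizable A, diagonalizable As,
      (exists d Vs, standard_ordering A As d Vs),
      (exists d Vs, standard_ordering As A d Vs) &
      (forall W : {vspace V}, (A @: W <= W)%VS -> (As @: W <= W)%VS ->
        W = 0%VS \/ W = fullv)].

Definition range_sum (d : nat) (U : nat -> {vspace V}) (lo hi : nat)
  : {vspace V} :=
  (\sum_(j < d.+1 | (lo <= j)%N && (j <= hi)%N) U j)%VS.

Definition prevU (U : nat -> {vspace V}) (i : nat) : {vspace V} :=
  if i is i'.+1 then U i' else 0%VS.
Definition nextU (d : nat) (U : nat -> {vspace V}) (i : nat) : {vspace V} :=
  if (i < d)%N then U i.+1 else 0%VS.

Definition dec_0D (d : nat) (Vs Vss : nat -> {vspace V}) (i : nat) := Vs i.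
Definition dec_0sDs (d : nat) (Vs Vss : nat -> {vspace V}) (i : nat) := Vss i.
Definition dec_0sD (d : nat) (Vs Vss : nat -> {vspace V}) (i : nat) :=
  (range_sum d Vss 0 i :&: range_sum d Vs i d)%VS.
Definition dec_0s0 (d : nat) (Vs Vss : nat -> {vspace V}) (i : nat) :=
  (range_sum d Vss 0 i :&: range_sum d Vs 0 (d - i))%VS.
Definition dec_Ds0 (d : nat) (Vs Vss : nat -> {vspace V}) (i : nat) :=
  (range_sum d Vss (d - i) d :&: range_sum d Vs 0 (d - i))%VS.
Definition dec_DsD (d : nat) (Vs Vss : nat -> {vspace V}) (i : nat) :=
  (range_sum d Vss (d - i) d :&: range_sum d Vs i d)%VS.

Definition sum_pred (d : nat) (U : nat -> {vspace V}) (P : nat -> bool)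
  : {vspace V} :=
  (\sum_(j < d.+1 | P j) U j)%VS.

End TD.

Definition qpow (K : fieldType) (q : K) (d i : nat) : K :=
  q ^ ((2 * i)%:Z - d%:Z).
Definition qpowN (K : fieldType) (q : K) (d i : nat) : K :=
  q ^ (d%:Z - (2 * i)%:Z).

(* Main.v *)
Require Import Defs.
From HB Require Import structures.
From mathcomp Require Import all_boot all_order all_algebra.
From mathcomp Require Import zify.
Import Order.TTheory GRing.Theory Num.Theory.
Local Open Scope ring_scope.
Local Open Scope vspace_scope.

Set Implicit Arguments. Unset Strict Implicit. Unset Printing Implicit Defensive.

Local Close Scope vspace_scope.
Section Gen.
Variables (K : fieldType) (V : vectType K).

Lemma sp_mem n (E : nat -> {vspace V}) (P : pred nat) j x :
  (j <= n)%N -> P j -> x \in E j -> x \in sum_pred n E P.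
Proof.
move=> jn Pj xE; rewrite /sum_pred.
have jn' : (j < n.+1)%N by [].
rewrite memvE; apply: (sumv_sup (Ordinal jn')) => //=; by rewrite -memvE.
Qed.

Lemma sp_memP n (E : nat -> {vspace V}) (P : pred nat) x :
  x \in sum_pred n E P -> exists2 xs : nat -> V,
    (forall j, (j <= n)%N -> P j -> xs j \in E j) &
    x = \sum_(j < n.+1 | P j) xs j.
Proof.
move=> /memv_sumP [vs Hvs ->].
exists (fun j => vs (inord j)).
  by move=> j jn Pj; have := Hvs (inord j); rewrite inordK //; apply.
by apply: eq_bigr => j _; rewrite inord_val.
Qed.

Lemma sp_img n (E : nat -> {vspace V}) (P : pred nat) (f : 'End(V)) (W : {vspace V}) :
  (forall j x, (j <= n)%N -> P j -> x \in E j -> f x \in W) ->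
  forall x, x \in sum_pred n E P -> f x \in W.
Proof.
move=> H x /sp_memP [xs Hxs ->]; rewrite linear_sum; apply: rpred_sum => j Pj.
have jn : (j <= n)%N by rewrite -ltnS. 
 by apply: H (Hxs _ jn Pj).
Qed.

Lemma sp_in n (E : nat -> {vspace V}) (P : pred nat) (W : {vspace V}) :
  (forall j x, (j <= n)%N -> P j -> x \in E j -> x \in W) ->
  forall x, x \in sum_pred n E P -> x \in W.
Proof.
move=> H x /sp_memP [xs Hxs ->]; apply: rpred_sum => j Pj.
have jn : (j <= n)%N by rewrite -ltnS.
by apply: H (Hxs _ jn Pj).
Qed.

Lemma sp_mono n (E : nat -> {vspace V}) (P Q : pred nat) :
  (forall j, (j <= n)%N -> P j -> Q j) ->
  forall x, x \in sum_pred n E P -> x \in sum_pred n E Q.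
Proof. by move=> H; apply: sp_in => j y jn Pj yE; apply: (sp_mem jn (H j jn Pj) yE). Qed.

Lemma subv_elem (U W : {vspace V}) : (forall x, x \in U -> x \in W) -> (U <= W)%VS.
Proof. by move=> H; apply/subvP. Qed.

Lemma img_elem (f : 'End(V)) (U W : {vspace V}) :
  (forall x, x \in U -> f x \in W) -> (f @: U <= W)%VS.
Proof. by move=> H; apply/subvP => y /memv_imgP [x xU ->]; apply: H. Qed.

Lemma eig_indep (f : 'End(V)) (th : nat -> K) k n (xs : nat -> V) x :
  (forall j, (j < n)%N -> f (xs j) = th j *: xs j) ->
  (forall j, (j < n)%N -> th j != th k) ->
  f x = th k *: x -> x = \sum_(j < n) xs j -> x = 0.
Proof.
elim: n xs x => [|n IH] xs x Hxs Hth Hx Hxe; first by rewrite Hxe big_ord0.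
rewrite big_ord_recr /= in Hxe.
set y := \sum_(j < n) xs j in Hxe.
have Hy : f y - th n *: y = \sum_(j < n) ((th j - th n) *: xs j).
  rewrite /y linear_sum scaler_sumr -sumrB; apply: eq_bigr => j _.
  change (f (xs j) - th n *: xs j = (th j - th n) *: xs j).
  by rewrite Hxs ?scalerBl // (ltn_trans (ltn_ord j)).
set z := (th k - th n) *: x.
have Hz : z = \sum_(j < n) ((th j - th n) *: xs j).
  rewrite /z scalerBl -Hx Hxe linearD /=.
  change (f y + f (xs n) - th n *: (y + xs n) = \sum_(j < n) (th j - th n) *: xs j).
  rewrite Hxs // scalerDr -Hy.
  by rewrite opprD addrACA subrr addr0.
have z0 : z = 0.
  apply: (IH (fun j => (th j - th n) *: xs j)) => //.
  - move=> j jn; rewrite linearZ /=.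
    change ((th j - th n) *: f (xs j) = th j *: ((th j - th n) *: xs j)).
    by rewrite Hxs ?(ltn_trans jn) // !scalerA mulrC.
  - by move=> j jn; apply: Hth; apply: ltn_trans jn _.
  - by rewrite /z linearZ /= Hx scalerA mulrC -scalerA.
move: z0; rewrite /z => /eqP; rewrite scaler_eq0 subr_eq0 eq_sym (negbTE (Hth n (ltnSn n))) /=.
by move/eqP.
Qed.

Lemma inv_pres (f g : 'End(V)) (L : {vspace V}) :
  (forall x, g (f x) = x) -> (forall x, x \in L -> f x \in L) ->
  forall x, x \in L -> g x \in L.
Proof.
move=> gf fL x xL.
have kf : lker f == 0%VS by apply/lker0P; apply: (can_inj gf).
have sub : (f @: L <= L)%VS by apply: img_elem.
have eqL : (f @: L)%VS = L.
  apply/eqP; rewrite eqEdim sub /= limg_dim_eq //.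
  by rewrite (eqP kf) capv0.
move: xL; rewrite -{1}eqL => /memv_imgP [y yL ->].
by rewrite gf.
Qed.

Section Split.
Variables (A As : 'End(V)).
Hypothesis hirr : forall W : {vspace V}, (A @: W <= W)%VS -> (As @: W <= W)%VS ->
  W = 0%VS \/ W = fullv.

Lemma inv_family n (U : nat -> {vspace V}) (al be : nat -> K) :
  (forall i x, (i <= n)%N -> x \in U i ->
     A x - al i *: x \in (if (i < n)%N then U i.+1 else 0%VS)) ->
  (forall i x, (i <= n)%N -> x \in U i ->
     As x - be i *: x \in (match i with 0 => 0%VS | j.+1 => U j end)) ->
  sum_pred n U (fun _ => true) = 0%VS \/ sum_pred n U (fun _ => true) = fullv.
Proof.
move=> HA HB; apply: hirr; apply: img_elem; apply: sp_img => i x ilen _ xU.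
- have -> : A x = (A x - al i *: x) + al i *: x by rewrite subrK.
  apply: rpredD; last by apply: rpredZ; apply: sp_mem xU.
  move: (HA i x ilen xU); case: ifP => [iltn|_]; last first.
    by rewrite memv0 => /eqP ->; rewrite mem0v.
  by move=> h; apply: sp_mem h.
- have -> : As x = (As x - be i *: x) + be i *: x by rewrite subrK.
  apply: rpredD; last by apply: rpredZ; apply: sp_mem xU.
  move: (HB i x ilen xU); case: i ilen xU => [|j] ilen xU.
    by rewrite memv0 => /eqP ->; rewrite mem0v.
  by move=> h; apply: (sp_mem (j := j)) h => //; apply: ltnW.
Qed.

Variables (d : nat) (T S : nat -> {vspace V}) (th ths : nat -> K).
Hypothesis hT : forall i, (i < d)%N -> (T i <= T i.+1)%VS.
Hypothesis hS : forall i, (i < d)%N -> (S i.+1 <= S i)%VS.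
Hypothesis hAT : forall i x, (i < d)%N -> x \in T i -> A x \in T i.+1.
Hypothesis hAS : forall i x, (i <= d)%N -> x \in S i ->
  A x - th i *: x \in (if (i < d)%N then S i.+1 else 0%VS).
Hypothesis hBS : forall i x, (0 < i <= d)%N -> x \in S i -> As x \in S i.-1.
Hypothesis hBT : forall i x, (i <= d)%N -> x \in T i ->
  As x - ths i *: x \in (match i with 0 => 0%VS | j.+1 => T j end).

Definition UU i := (T i :&: S i)%VS.

Lemma T_mono i j : (i <= j <= d)%N -> (T i <= T j)%VS.
Proof.
elim: j => [|j IH]; first by rewrite leqn0 => /andP [/eqP -> _].
move=> /andP [ij jd]; rewrite leq_eqVlt in ij; case/orP: ij => [/eqP -> //|ij].
apply: subv_trans (hT jd); apply: IH; rewrite -ltnS ij /=; exact: ltnW.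
Qed.

Lemma S_mono i j : (i <= j <= d)%N -> (S j <= S i)%VS.
Proof.
elim: j => [|j IH]; first by rewrite leqn0 => /andP [/eqP -> _].
move=> /andP [ij jd]; rewrite leq_eqVlt in ij; case/orP: ij => [/eqP -> //|ij].
apply: subv_trans (hS jd) _; apply: IH; rewrite -ltnS ij /=; exact: ltnW.
Qed.

Lemma UU_shiftA i x : (i <= d)%N -> x \in UU i ->
  A x - th i *: x \in (if (i < d)%N then UU i.+1 else 0%VS).
Proof.
move: i x; move=> i x id; rewrite memv_cap => /andP [xT xS].
  have := hAS id xS; case: ifP => // iltd h.
  rewrite /UU memv_cap h andbT; apply: rpredB; first exact: hAT.
  by apply: rpredZ; apply: (subvP (hT iltd)).
Qed.

Lemma UU_shiftB i x : (i <= d)%N -> x \in UU i ->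
  As x - ths i *: x \in (match i with 0 => 0%VS | j.+1 => UU j end).
Proof.
move: i x; move=> i x id; rewrite memv_cap => /andP [xT xS].
  have := hBT id xT; case: i id xT xS => [//|j] id xT xS h.
  rewrite /UU memv_cap h /=; apply: rpredB; first exact: (hBS (i := j.+1)).
  by apply: rpredZ; apply: (subvP (hS id)).
Qed.

Lemma split_full : (T 0 :&: S 0 != 0)%VS -> sum_pred d UU (fun _ => true) = fullv.
Proof.
move=> nz.
suff : sum_pred d UU (fun _ => true) = 0%VS \/ sum_pred d UU (fun _ => true) = fullv.
  case => [H0|//]; exfalso; move/negP: nz; apply; rewrite -subv0 -H0 /UU.
  by apply/subvP => x xU; apply: (sp_mem (j := 0)).
apply: (@inv_family d UU th ths).
- exact: UU_shiftA.
- exact: UU_shiftB.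
Qed.

Lemma split_zero : S 1 != fullv -> forall i, (i < d)%N -> (T i :&: S i.+1 = 0)%VS.
Proof.
move=> nS i id.
have d0 : (0 < d)%N by apply: leq_ltn_trans id.
set n := d.-1.
have dn : d = n.+1 by rewrite /n prednK.
have kd : forall k, (k <= n)%N -> (k < d)%N by move=> k; rewrite dn.
suff : sum_pred n (fun i => T i :&: S i.+1)%VS (fun _ => true) = 0%VS \/ sum_pred n (fun i => T i :&: S i.+1)%VS (fun _ => true) = fullv.
  case => [H0|Hf].
  - apply/eqP; rewrite -subv0 -H0; apply/subvP => x xU.
    by apply: (sp_mem (j := i)) => //; rewrite -ltnS -dn.
  - exfalso; move/negP: nS; apply; rewrite eqEsubv subvf /= -Hf.
    apply/subvP; apply: sp_in => k x kn _; rewrite memv_cap => /andP [_ xS].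
    apply: (subvP _ _ xS); apply: S_mono; rewrite ltnS /=; exact: kd.
apply: (@inv_family n (fun i => T i :&: S i.+1)%VS (fun i => th i.+1) ths).
- move=> k x kn; rewrite memv_cap => /andP [xT xS].
  have := hAS (kd _ kn) xS; rewrite dn ltnS; case: ifP => // kltn h.
  rewrite memv_cap h andbT; apply: rpredB; first by apply: hAT => //; apply: kd.
  by apply: rpredZ; apply: (subvP (hT _)) => //; apply: kd.
- move=> k x kn; rewrite memv_cap => /andP [xT xS].
  have := hBT (ltnW (kd _ kn)) xT; case: k kn xT xS => [//|j] kn xT xS h.
  rewrite memv_cap h /=; apply: rpredB.
    by apply: (hBS (i := j.+2)) => //=; apply: kd.
  by apply: rpredZ; apply: (subvP (hS _)) => //; apply: kd.
Qed.

Lemma flagS : sum_pred d UU (fun _ => true) = fullv ->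
  (forall i, (i < d)%N -> (T i :&: S i.+1 = 0)%VS) ->
  forall j x, (j <= d)%N -> x \in S j -> x \in sum_pred d UU (fun k => (j <= k)%N).
Proof.
move=> Hf Hz j x jd xS.
have : x \in sum_pred d UU (fun _ => true) by rewrite Hf memvf.
case: j jd xS => [|j] jd xS.
  by apply: sp_mono.
move=> /sp_memP [xs Hxs Hx].
rewrite (bigID (fun k : 'I_d.+1 => (k < j.+1)%N)) /= in Hx.
set a := (\sum_(i < d.+1 | _) _)%R in Hx.
set b := (\sum_(i < d.+1 | _) _)%R in Hx.
have bS : b \in sum_pred d UU (fun k => (j.+1 <= k)%N).
  apply: rpred_sum => k; rewrite -leqNgt => jk.
  have kd : (k <= d)%N by rewrite -ltnS.
  exact: (sp_mem kd jk (Hxs _ kd isT)).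
have bS' : b \in S j.+1.
  apply: rpred_sum => k; rewrite -leqNgt => jk.
  have kd : (k <= d)%N by rewrite -ltnS.
  have := Hxs _ kd isT; rewrite /UU memv_cap => /andP [_ h].
  by apply: (subvP (S_mono _) _ h); rewrite jk.
have aT : a \in T j.
  apply: rpred_sum => k; rewrite ltnS => kj.
  have kd : (k <= d)%N by rewrite -ltnS.
  have := Hxs _ kd isT; rewrite /UU memv_cap => /andP [h _].
  by apply: (subvP (T_mono _) _ h); rewrite kj /= ltnW.
have aS : a \in S j.+1.
  have -> : a = x - b by rewrite Hx addrK.
  by apply: rpredB.
have : a \in (T j :&: S j.+1)%VS by rewrite memv_cap aT aS.
rewrite Hz // memv0 => /eqP a0.
by rewrite Hx a0 add0r.
Qed.

Lemma flagT : sum_pred d UU (fun _ => true) = fullv ->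
  (forall i, (i < d)%N -> (T i :&: S i.+1 = 0)%VS) ->
  forall j x, (j <= d)%N -> x \in T j -> x \in sum_pred d UU (fun k => (k <= j)%N).
Proof.
move=> Hf Hz j x jd xT.
have : x \in sum_pred d UU (fun _ => true) by rewrite Hf memvf.
rewrite leq_eqVlt in jd; case/orP: jd => [/eqP -> | jd].
  by apply: sp_mono => k kd _.
move=> /sp_memP [xs Hxs Hx].
rewrite (bigID (fun k : 'I_d.+1 => (k <= j)%N)) /= in Hx.
set a := (\sum_(i < d.+1 | _) _)%R in Hx.
set b := (\sum_(i < d.+1 | _) _)%R in Hx.
have aS : a \in sum_pred d UU (fun k => (k <= j)%N).
  apply: rpred_sum => k kj.
  have kd : (k <= d)%N by rewrite -ltnS.
  exact: (sp_mem kd kj (Hxs _ kd isT)).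
have bS : b \in S j.+1.
  apply: rpred_sum => k; rewrite -ltnNge => jk.
  have kd : (k <= d)%N by rewrite -ltnS.
  have := Hxs _ kd isT; rewrite /UU memv_cap => /andP [_ h].
  by apply: (subvP (S_mono _) _ h); rewrite jk.
have aT : a \in T j.
  apply: rpred_sum => k kj.
  have kd : (k <= d)%N by rewrite -ltnS.
  have := Hxs _ kd isT; rewrite /UU memv_cap => /andP [h _].
  by apply: (subvP (T_mono _) _ h); rewrite kj /= ltnW.
have bT : b \in T j.
  have -> : b = x - a by rewrite Hx addrC addrK.
  by apply: rpredB.
have : b \in (T j :&: S j.+1)%VS by rewrite memv_cap bT bS.
rewrite Hz // memv0 => /eqP b0.
by rewrite Hx b0 addr0.
Qed.

End Split.
End Gen.

Section Sc.
Variables (K : fieldType) (q : K).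
Hypothesis q0 : q != 0.
Hypothesis qr : forall n : nat, (0 < n)%N -> q ^+ n != 1.

Lemma zpow1 (z : int) : q ^ z = 1 -> z = 0.
Proof.
case: z => n /=.
  case: n => [//|n] h; exfalso; by move/negP: (qr (ltn0Sn n)); apply; apply/eqP.
move=> h; exfalso; move: h; rewrite NegzE -exprnN => /eqP; rewrite invr_eq1 => /eqP h.
by move/negP: (qr (ltn0Sn n)); apply; apply/eqP.
Qed.

Lemma zpow_inj (z1 z2 : int) : q ^ z1 = q ^ z2 -> z1 = z2.
Proof.
move=> h; apply/eqP; rewrite -subr_eq0; apply/eqP/zpow1.
by rewrite expfzDr // -invr_expz h mulfV // expfz_neq0.
Qed.

Lemma qpow_inj d i j : qpow q d i = qpow q d j -> i = j.
Proof. rewrite /qpow => /zpow_inj; lia. Qed.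
Lemma qpowN_inj d i j : qpowN q d i = qpowN q d j -> i = j.
Proof. rewrite /qpowN => /zpow_inj; lia. Qed.
Lemma qpow_neq0 d i : qpow q d i != 0. Proof. exact: expfz_neq0. Qed.
Lemma qpowN_neq0 d i : qpowN q d i != 0. Proof. exact: expfz_neq0. Qed.
Lemma qpowNK d i : qpowN q d i * qpow q d i = 1.
Proof. rewrite /qpowN /qpow -expfzDr //; have -> : (d%:Z - (2 * i)%:Z + ((2 * i)%:Z - d%:Z)) = 0 by lia. by []. Qed.
Lemma qpowS d i : qpow q d i.+1 = q ^+ 2 * qpow q d i.
Proof. rewrite /qpow; have -> : ((2 * i.+1)%:Z - d%:Z) = 2%:Z + ((2 * i)%:Z - d%:Z) by lia.
by rewrite expfzDr. Qed.
Lemma qpowNS d i : qpowN q d i = q ^+ 2 * qpowN q d i.+1.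
Proof. rewrite /qpowN; have -> : (d%:Z - (2 * i)%:Z) = 2%:Z + (d%:Z - (2 * i.+1)%:Z) by lia.
by rewrite expfzDr. Qed.
Lemma qpow_rev d i : (i <= d)%N -> qpow q d (d - i) = qpowN q d i.
Proof. move=> id; rewrite /qpow /qpowN; congr (_ ^ _); lia. Qed.
Lemma qpowN_rev d i : (i <= d)%N -> qpowN q d (d - i) = qpow q d i.
Proof. move=> id; rewrite /qpow /qpowN; congr (_ ^ _); lia. Qed.
End Sc.

Lemma range_sumE (K : fieldType) (V : vectType K) d (E : nat -> {vspace V}) lo hi :
  range_sum d E lo hi = sum_pred d E (fun j => (lo <= j) && (j <= hi))%N.
Proof. by []. Qed.

Lemma leig_mem (K : fieldType) (V : vectType K) (f : 'End(V)) c x :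
  (x \in passmx.leigenspace f c) = (f x == c *: x).
Proof. by rewrite /passmx.leigenspace memv_ker !lfun_simp /= ?id_lfunE ?subr_eq0. Qed.

Lemma eig_exh (K : fieldType) (V : vectType K) (f g : 'End(V)) d (E : nat -> {vspace V}) (t : nat -> K) :
  standard_ordering f g d E ->
  (forall i, (i <= d)%N -> E i = passmx.leigenspace f (t i)) ->
  forall c x, f x = c *: x -> x != 0 -> exists2 j, (j <= d)%N & c = t j.
Proof.
case=> _ _ Hex _ HE c x fx x0.
have xin : x \in passmx.leigenspace f c by rewrite leig_mem fx.
have nz : passmx.leigenspace f c != 0%VS.
  apply/negP => /eqP h; move: xin; rewrite h memv0; apply/negP; exact: x0.
have [j jd Hj] := Hex _ (ex_intro _ c (conj erefl nz)).
exists j => //; move: xin; rewrite Hj HE // leig_mem fx => /eqP h.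
by move/eqP: h; rewrite -subr_eq0 -scalerBl scaler_eq0 (negbTE x0) orbF subr_eq0 => /eqP.
Qed.

Lemma eig_full (K : fieldType) (V : vectType K) (f g : 'End(V)) d (E : nat -> {vspace V}) :
  standard_ordering f g d E -> Defs.diagonalizable f -> range_sum d E 0 d = fullv.
Proof.
case=> _ _ Hex _ [s Hs]; apply/eqP; rewrite eqEsubv subvf /= -Hs.
elim/big_rec: _ => [|t W _ HW]; first exact: sub0v.
rewrite subv_add HW andbT.
have [->|nz] := eqVneq (passmx.leigenspace f t) 0%VS; first exact: sub0v.
have [j jd ->] := Hex _ (ex_intro _ t (conj erefl nz)).
apply/subvP => x xE; rewrite range_sumE; apply: (sp_mem jd) xE; by rewrite /= jd.
Qed.

Lemma eig_nz (K : fieldType) (V : vectType K) (f g : 'End(V)) d (E : nat -> {vspace V}) i :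
  standard_ordering f g d E -> (i <= d)%N -> E i != 0%VS.
Proof. by case=> H _ _ _ id; have [c [_ ->]] := H i id. Qed.

Lemma eig_tri (K : fieldType) (V : vectType K) (f g : 'End(V)) d (E : nat -> {vspace V}) i x :
  standard_ordering f g d E -> (i <= d)%N -> x \in E i -> g x \in tri_sum d E i.
Proof. by case=> _ _ _ H id xE; apply: (subvP (H i id)); apply: memv_img. Qed.

Lemma sp_imgB (K : fieldType) (V : vectType K) n (E : nat -> {vspace V}) (P : pred nat)
  (f : 'End(V)) (c : K) (W : {vspace V}) :
  (forall j x, (j <= n)%N -> P j -> x \in E j -> f x - c *: x \in W) ->
  forall x, x \in sum_pred n E P -> f x - c *: x \in W.
Proof.
move=> H x /sp_memP [xs Hxs ->].
rewrite linear_sum scaler_sumr -sumrB; apply: rpred_sum => j Pj.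
have jn : (j <= n)%N by rewrite -ltnS.
exact: H (Hxs _ jn Pj).
Qed.

Lemma sp_empty (K : fieldType) (V : vectType K) n (E : nat -> {vspace V}) (P : pred nat) x :
  (forall j, (j <= n)%N -> ~~ P j) -> x \in sum_pred n E P -> x = 0.
Proof.
move=> H xin; apply/eqP; rewrite -memv0; move: x xin; apply: sp_in => j x jn Pj.
by move: (H j jn); rewrite Pj.
Qed.

Section EigGen.
Variables (K : fieldType) (V : vectType K) (f g : 'End(V)) (d : nat)
  (E : nat -> {vspace V}) (t : nat -> K).
Hypothesis SOE : standard_ordering f g d E.
Hypothesis HE : forall i, (i <= d)%N -> E i = passmx.leigenspace f (t i).
Hypothesis tinj : forall i j, t i = t j -> i = j.

Lemma eigEv i x : (i <= d)%N -> x \in E i -> f x = t i *: x.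
Proof. by move=> id; rewrite HE // leig_mem => /eqP. Qed.

Lemma memEv i x : (i <= d)%N -> f x = t i *: x -> x \in E i.
Proof. by move=> id h; rewrite HE // leig_mem h. Qed.

Lemma f_top lo hi x : x \in range_sum d E lo hi ->
  f x - t hi *: x \in sum_pred d E (fun j => (lo <= j) && (j < hi))%N.
Proof.
rewrite range_sumE; apply: sp_imgB => j y jd /andP [lj jh] yE.
rewrite (eigEv jd yE) -scalerBl.
have [->|ne] := eqVneq j hi; first by rewrite subrr scale0r rpred0.
apply: rpredZ; apply: (sp_mem jd) yE; by rewrite lj ltn_neqAle ne jh.
Qed.

Lemma f_bot lo hi x : x \in range_sum d E lo hi ->
  f x - t lo *: x \in sum_pred d E (fun j => (lo < j) && (j <= hi))%N.
Proof.
rewrite range_sumE; apply: sp_imgB => j y jd /andP [lj jh] yE.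
rewrite (eigEv jd yE) -scalerBl.
have [->|ne] := eqVneq j lo; first by rewrite subrr scale0r rpred0.
apply: rpredZ; apply: (sp_mem jd) yE; by rewrite jh andbT ltn_neqAle eq_sym ne lj.
Qed.

Lemma g_range lo hi x : x \in range_sum d E lo hi ->
  g x \in sum_pred d E (fun j => (lo <= j.+1) && (j <= hi.+1))%N.
Proof.
rewrite range_sumE; apply: sp_img => i y id /andP [li ih] yE.
have h : g y \in sum_pred d E (fun j => (i <= j.+1) && (j <= i.+1))%N := eig_tri SOE id yE.
move: h; apply: sp_mono => j jd /andP [ij ji].
by rewrite (leq_trans li ij) (leq_trans ji _).
Qed.

Lemma eig_out k (P : pred nat) x : (k <= d)%N -> x \in E k -> ~~ P k ->
  x \in sum_pred d E P -> x = 0.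
Proof.
move=> kd xE nPk /sp_memP [xs Hxs Hx].
rewrite big_mkcond /= in Hx.
apply: (@eig_indep _ _ f (fun j => if j == d.+1 then t k else if P j then t j else t k + 1) d.+1 d.+1
   (fun j => if P j then xs j else 0) x) => //.
- move=> j jd; rewrite (ltn_eqF jd); case: ifP => Pj; last by rewrite linear0 scaler0.
  exact: eigEv (Hxs _ _ Pj).
- move=> j jd; rewrite (ltn_eqF jd) eqxx; case: ifP => Pj.
    apply/eqP => h0; have h := tinj h0; by move: nPk; rewrite -h Pj.
  by rewrite -subr_eq0 addrAC subrr add0r oner_eq0.
- by rewrite eqxx [f x](eigEv kd xE).
Qed.

End EigGen.

Lemma sp_emptyW (K : fieldType) (V : vectType K) n (E : nat -> {vspace V}) (P : pred nat) x
  (W : {vspace V}) :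
  x \in sum_pred n E P -> (forall j, (j <= n)%N -> ~~ P j) -> x \in W.
Proof. by move=> xin H; rewrite (sp_empty H xin) mem0v. Qed.

Lemma vec_calc (K : fieldType) (V : vectType K) (Q c t a : K) (u w : V) :
  c * t = a ->
  Q *: (c *: (t *: u + w)) - (t *: (c *: u) + (Q * c) *: w) = ((Q - 1) * a) *: u.
Proof.
move=> e; rewrite !scalerDr !scalerA opprD addrACA subrr addr0 -scalerBl.
by congr (_ *: _); rewrite [t * c]mulrC -mulrA e mulrBl mul1r.
Qed.

Lemma vec_calc2 (K : fieldType) (V : vectType K) (Q qN t a : K) (x y : V) :
  qN * t = a ->
  ((Q - 1) * a) *: x + t *: y - Q *: (qN *: (t *: x)) = t *: y - t *: (qN *: x).
Proof.
move=> e; rewrite !scalerA -mulrA e [t * qN]mulrC e addrAC -scalerBl mulrBl mul1r.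
by rewrite addrAC subrr add0r scaleNr addrC.
Qed.

Lemma inv_diff (K : fieldType) (V : vectType K) (f g : 'End(V)) (c c' : K) (y : V) :
  c * c' = 1 -> (forall x, g (f x) = x) -> g y - c *: y = - c *: g (f y - c' *: y).
Proof.
move=> e gf.
have -> : g (f y - c' *: y) = y - c' *: g y by rewrite linearB linearZ /= gf.
by rewrite scalerBr !scaleNr scalerA e scale1r opprK addrC.
Qed.

Lemma mem0_any (K : fieldType) (V : vectType K) (x : V) (W : {vspace V}) :
  x \in (0%VS : {vspace V}) -> x \in W.
Proof. by rewrite memv0 => /eqP ->; rewrite mem0v. Qed.

Lemma img_sub_form (K : fieldType) (V : vectType K) (f : 'End(V)) (c : K) (U W : {vspace V}) :
  (forall x, x \in U -> f x - c *: x \in W) -> ((f - c *: \1)%VF @: U <= W)%VS.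
Proof.
move=> H; apply: img_elem => x xU.
by rewrite !lfun_simp /= ?id_lfunE; apply: H.
Qed.

Section Main.
Variables (K : fieldType) (q : K) (V : vectType K)
  (A As : 'End(V)) (d : nat) (Vs Vss : nat -> {vspace V}) (a as_ : K)
  (Ks : 'End(V)).
Hypothesis q0 : q != 0%R.
Hypothesis qr : forall n : nat, (0 < n)%N -> q ^+ n != 1%R.
Hypothesis TD : TD_pair A As.
Hypothesis SO : standard_ordering A As d Vs.
Hypothesis SOs : standard_ordering As A d Vss.
Hypothesis a0 : a != 0%R.
Hypothesis as0 : as_ != 0%R.
Hypothesis HVs : forall i, (i <= d)%N -> Vs i = passmx.leigenspace A (a * qpow q d i).
Hypothesis HVss : forall i, (i <= d)%N -> Vss i = passmx.leigenspace As (as_ * qpowN q d i).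
Hypothesis HKs : forall i, (i <= d)%N -> forall v, v \in dec_Ds0 d Vs Vss i ->
     Ks v = qpow q d i *: v.

Lemma hirr : forall W : {vspace V}, (A @: W <= W)%VS -> (As @: W <= W)%VS ->
  W = 0%VS \/ W = fullv.
Proof. by case: TD => _ [_ _ _ _ H]. Qed.

Lemma thinj i j : a * qpow q d i = a * qpow q d j -> i = j.
Proof. by move/(mulfI a0)/(qpow_inj q0 qr). Qed.
Lemma thsinj i j : as_ * qpowN q d i = as_ * qpowN q d j -> i = j.
Proof. by move/(mulfI as0)/(qpowN_inj q0 qr). Qed.

Notation Tl := (fun i => range_sum d Vss 0 i).
Notation Th := (fun i => range_sum d Vss (d - i) d).
Notation Su := (fun i => range_sum d Vs i d).
Notation Sd := (fun i => range_sum d Vs 0 (d - i)).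

Lemma Tl_hT i : (i < d)%N -> (Tl i <= Tl i.+1)%VS.
Proof. move=> _; apply/subvP; rewrite !range_sumE; apply: sp_mono => j _ /andP [h1 h2]; apply/andP; split; lia. Qed.
Lemma Th_hT i : (i < d)%N -> (Th i <= Th i.+1)%VS.
Proof. move=> _; apply/subvP; rewrite !range_sumE; apply: sp_mono => j _ /andP [h1 h2]; apply/andP; split; lia. Qed.
Lemma Su_hS i : (i < d)%N -> (Su i.+1 <= Su i)%VS.
Proof. move=> _; apply/subvP; rewrite !range_sumE; apply: sp_mono => j _ /andP [h1 h2]; apply/andP; split; lia. Qed.
Lemma Sd_hS i : (i < d)%N -> (Sd i.+1 <= Sd i)%VS.
Proof. move=> _; apply/subvP; rewrite !range_sumE; apply: sp_mono => j _ /andP [h1 h2]; apply/andP; split; lia. Qed.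

Lemma Tl_hAT i x : (i < d)%N -> x \in Tl i -> A x \in Tl i.+1.
Proof.
move=> _ /(g_range SOs); rewrite range_sumE; apply: sp_mono => j _ /andP [h1 h2]; apply/andP; split; lia.
Qed.
Lemma Th_hAT i x : (i < d)%N -> x \in Th i -> A x \in Th i.+1.
Proof.
move=> _ /(g_range SOs); rewrite range_sumE; apply: sp_mono => j jd /andP [h1 h2]; apply/andP; split; lia.
Qed.
Lemma Su_hBS i x : (0 < i <= d)%N -> x \in Su i -> As x \in Su i.-1.
Proof.
move=> _ /(g_range SO); rewrite range_sumE; apply: sp_mono => j jd /andP [h1 h2]; apply/andP; split; lia.
Qed.
Lemma Sd_hBS i x : (0 < i <= d)%N -> x \in Sd i -> As x \in Sd i.-1.
Proof.
move=> /andP [i0 id] /(g_range SO); rewrite range_sumE; apply: sp_mono => j jd /andP [h1 h2]; apply/andP; split; lia.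
Qed.

Lemma Tl_hBT i x : (i <= d)%N -> x \in Tl i ->
  As x - (as_ * qpowN q d i) *: x \in (match i with 0 => 0%VS | j.+1 => Tl j end).
Proof.
move=> id /(f_top HVss); case: i id => [|i] id.
  by move/sp_emptyW; apply => j _; rewrite ltn0 andbF.
rewrite range_sumE; apply: sp_mono => j _ /andP [h1 h2]; apply/andP; split; lia.
Qed.
Lemma Th_hBT i x : (i <= d)%N -> x \in Th i ->
  As x - (as_ * qpowN q d (d - i)) *: x \in (match i with 0 => 0%VS | j.+1 => Th j end).
Proof.
move=> id /(f_bot HVss); case: i id => [|i] id.
  by move/sp_emptyW; apply => j jd; apply/negP => /andP [h1 h2]; lia.
rewrite range_sumE; apply: sp_mono => j _ /andP [h1 h2]; apply/andP; split; lia.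
Qed.
Lemma Su_hAS i x : (i <= d)%N -> x \in Su i ->
  A x - (a * qpow q d i) *: x \in (if (i < d)%N then Su i.+1 else 0%VS).
Proof.
move=> id /(f_bot HVs); case: ifP => idd.
  rewrite range_sumE; apply: sp_mono => j _ /andP [h1 h2]; apply/andP; split; lia.
by move/sp_emptyW; apply => j jd; apply/negP => /andP [h1 h2]; lia.
Qed.
Lemma Sd_hAS i x : (i <= d)%N -> x \in Sd i ->
  A x - (a * qpow q d (d - i)) *: x \in (if (i < d)%N then Sd i.+1 else 0%VS).
Proof.
move=> id /(f_top HVs); case: ifP => idd.
  rewrite range_sumE; apply: sp_mono => j _ /andP [h1 h2]; apply/andP; split; lia.
by move/sp_emptyW; apply => j jd; apply/negP => /andP [h1 h2]; lia.
Qed.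


Lemma fullVs : range_sum d Vs 0 d = fullv.
Proof. by case: TD => _ [dA _ _ _ _]; apply: eig_full SO dA. Qed.

Lemma nz_helper (T0 S0 : {vspace V}) k : (k <= d)%N -> (Vss k <= T0)%VS -> S0 = fullv ->
  (T0 :&: S0 != 0)%VS.
Proof.
move=> kd sub ->; rewrite capvf; apply/negP => /eqP h.
by move: (eig_nz SOs kd); rewrite -subv0 -h sub.
Qed.

Lemma Vss_Tl k : (k <= d)%N -> (Vss k <= Tl k)%VS.
Proof. by move=> kd; apply/subvP => x xE; rewrite range_sumE; apply: (sp_mem kd) xE; rewrite /= leqnn. Qed.
Lemma Vss_Th : (Vss d <= Th 0%N)%VS.
Proof. by apply/subvP => x xE; rewrite range_sumE; apply: (sp_mem (leqnn d)) xE; rewrite /= subn0 leqnn. Qed.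
Lemma Su0 : Su 0%N = fullv. Proof. exact: fullVs. Qed.
Lemma Sd0 : Sd 0%N = fullv. Proof. by rewrite /= subn0 fullVs. Qed.

Lemma Su1 : (0 < d)%N -> Su 1%N != fullv.
Proof.
move=> d0; apply/negP => /eqP h.
have xnz : vpick (Vs 0) != 0 by rewrite vpick0 (eig_nz SO).
have xin : vpick (Vs 0) \in Su 1%N by rewrite h memvf.
rewrite range_sumE in xin.
have := eig_out HVs thinj (leq0n d) (memv_pick _) _ xin.
by move=> h0; move/negP: xnz; apply; rewrite h0.
Qed.

Lemma Sd1 : (0 < d)%N -> Sd 1%N != fullv.
Proof.
move=> d0; apply/negP => /eqP h.
have xnz : vpick (Vs d) != 0 by rewrite vpick0 (eig_nz SO).
have xin : vpick (Vs d) \in Sd 1%N by rewrite h memvf.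
rewrite range_sumE in xin.
have := eig_out HVs thinj (leqnn d) (memv_pick _) _ xin.
move=> h0; move/negP: xnz; apply; rewrite h0 //.
by apply/negP => /andP [_ h1]; lia.
Qed.

Notation th := (fun i => a * qpow q d i).
Notation ths := (fun i => as_ * qpowN q d i).
Notation thr := (fun i => a * qpow q d (d - i)).
Notation thsr := (fun i => as_ * qpowN q d (d - i)).

Lemma D1full : sum_pred d (UU Tl Su) (fun _ => true) = fullv.
Proof.
apply: (split_full hirr (th := th) (ths := ths) Tl_hT Su_hS Tl_hAT Su_hAS Su_hBS Tl_hBT).
exact: (nz_helper (leq0n d) (Vss_Tl (leq0n d)) Su0).
Qed.
Lemma D1zero i : (i < d)%N -> (Tl i :&: Su i.+1 = 0)%VS.
Proof.
move=> id; apply: (split_zero hirr (th := th) (ths := ths) Tl_hT Su_hS Tl_hAT Su_hAS Su_hBS Tl_hBT) => //.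
by apply: Su1; apply: leq_ltn_trans id.
Qed.
Lemma D1flagS j x : (j <= d)%N -> x \in Su j -> x \in sum_pred d (UU Tl Su) (fun k => (j <= k)%N).
Proof. exact: (flagS Tl_hT Su_hS D1full D1zero). Qed.
Lemma D1flagT j x : (j <= d)%N -> x \in Tl j -> x \in sum_pred d (UU Tl Su) (fun k => (k <= j)%N).
Proof. exact: (flagT Tl_hT Su_hS D1full D1zero). Qed.

Lemma D2full : sum_pred d (UU Th Sd) (fun _ => true) = fullv.
Proof.
apply: (split_full hirr (th := thr) (ths := thsr) Th_hT Sd_hS Th_hAT Sd_hAS Sd_hBS Th_hBT).
exact: (nz_helper (leqnn d) Vss_Th Sd0).
Qed.
Lemma D2shiftA i x : (i <= d)%N -> x \in UU Th Sd i ->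
  A x - thr i *: x \in (if (i < d)%N then UU Th Sd i.+1 else 0%VS).
Proof. exact: (UU_shiftA Th_hT Th_hAT Sd_hAS). Qed.
Lemma D2shiftB i x : (i <= d)%N -> x \in UU Th Sd i ->
  As x - thsr i *: x \in (match i with 0 => 0%VS | j.+1 => UU Th Sd j end).
Proof. exact: (UU_shiftB Sd_hS Sd_hBS Th_hBT). Qed.

Lemma D3full : sum_pred d (UU Th Su) (fun _ => true) = fullv.
Proof.
apply: (split_full hirr (th := th) (ths := thsr) Th_hT Su_hS Th_hAT Su_hAS Su_hBS Th_hBT).
exact: (nz_helper (leqnn d) Vss_Th Su0).
Qed.
Lemma D3zero i : (i < d)%N -> (Th i :&: Su i.+1 = 0)%VS.
Proof.
move=> id; apply: (split_zero hirr (th := th) (ths := thsr) Th_hT Su_hS Th_hAT Su_hAS Su_hBS Th_hBT) => //.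
by apply: Su1; apply: leq_ltn_trans id.
Qed.
Lemma D3flagT j x : (j <= d)%N -> x \in Th j -> x \in sum_pred d (UU Th Su) (fun k => (k <= j)%N).
Proof. exact: (flagT Th_hT Su_hS D3full D3zero). Qed.

Lemma D4full : sum_pred d (UU Tl Sd) (fun _ => true) = fullv.
Proof.
apply: (split_full hirr (th := thr) (ths := ths) Tl_hT Sd_hS Tl_hAT Sd_hAS Sd_hBS Tl_hBT).
exact: (nz_helper (leq0n d) (Vss_Tl (leq0n d)) Sd0).
Qed.
Lemma D4zero i : (i < d)%N -> (Tl i :&: Sd i.+1 = 0)%VS.
Proof.
move=> id; apply: (split_zero hirr (th := thr) (ths := ths) Tl_hT Sd_hS Tl_hAT Sd_hAS Sd_hBS Tl_hBT) => //.
by apply: Sd1; apply: leq_ltn_trans id.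
Qed.
Lemma D4flagS j x : (j <= d)%N -> x \in Sd j -> x \in sum_pred d (UU Tl Sd) (fun k => (j <= k)%N).
Proof. exact: (flagS Tl_hT Sd_hS D4full D4zero). Qed.


Notation U2 := (UU Th Sd).

Lemma Ks_U i x : (i <= d)%N -> x \in U2 i -> Ks x = qpow q d i *: x.
Proof. by move=> id xU; apply: (HKs id). Qed.

Lemma Ks_pre i x : (i <= d)%N -> x \in U2 i -> Ks (qpowN q d i *: x) = x.
Proof. by move=> id xU; rewrite linearZ /= (Ks_U id xU) scalerA qpowNK // scale1r. Qed.

Lemma Ks_ker : lker Ks == 0%VS.
Proof.
have full : (fullv <= limg Ks)%VS.
  apply/subvP => y _; have : y \in sum_pred d U2 (fun _ => true) by rewrite D2full memvf.
  move: y; apply: sp_in => i x id _ xU.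
  by rewrite -(Ks_pre id xU) memv_img // memvf.
have h := limg_ker_dim Ks fullv.
have e : (Ks @: fullv)%VS = fullv by apply/eqP; rewrite eqEsubv subvf.
rewrite e capfv in h.
by rewrite -dimv_eq0; apply/eqP; lia.
Qed.

Notation Ki := (Ks^-1)%VF.
Lemma KiK x : Ki (Ks x) = x. Proof. exact: (lker0_lfunK Ks_ker). Qed.
Lemma KKi x : Ks (Ki x) = x. Proof. exact: (lker0_lfunVK Ks_ker). Qed.

Lemma Ki_U i x : (i <= d)%N -> x \in U2 i -> Ki x = qpowN q d i *: x.
Proof. by move=> id xU; rewrite -{1}(Ks_pre id xU) KiK. Qed.

Lemma R1 v : q ^+ 2 *: A (Ks v) - Ks (A v) = ((q ^+ 2 - 1) * a) *: v.
Proof.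
set L := (q ^+ 2 *: (A \o Ks) - (Ks \o A) - ((q ^+ 2 - 1) * a) *: \1)%VF.
suff : v \in lker L.
  by rewrite memv_ker /L !lfun_simp /= ?id_lfunE subr_eq0 => /eqP.
have : v \in sum_pred d U2 (fun _ => true) by rewrite D2full memvf.
apply: sp_in => i u id _ uU.
rewrite memv_ker /L !lfun_simp /= ?id_lfunE.
change (q ^+ 2 *: A (Ks u) - Ks (A u) - ((q ^+ 2 - 1) * a) *: u == 0).
rewrite subr_eq0; apply/eqP.
have hw := D2shiftA id uU; set w := A u - _ *: u in hw.
have Au : A u = (a * qpow q d (d - i)) *: u + w by rewrite /w addrC subrK.
have Kw : Ks w = (q ^+ 2 * qpow q d i) *: w.
  move: hw; case: ifP => idd hw; last by move: hw; rewrite memv0 => /eqP ->; rewrite linear0 scaler0.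
  by rewrite (Ks_U idd hw) (qpowS q0).
rewrite (Ks_U id uU) linearZ /= Au.
have -> : Ks ((a * qpow q d (d - i)) *: u + w) =
    (a * qpow q d (d - i)) *: (qpow q d i *: u) + (q ^+ 2 * qpow q d i) *: w.
  by rewrite linearD linearZ /= (Ks_U id uU) Kw.
apply: vec_calc.
by rewrite qpow_rev // mulrCA [qpow _ _ _ * _]mulrC (qpowNK q0) mulr1.
Qed.

Lemma R2 v : q ^+ 2 *: As (Ki v) - Ki (As v) = ((q ^+ 2 - 1) * as_) *: v.
Proof.
set L := (q ^+ 2 *: (As \o Ki) - (Ki \o As) - ((q ^+ 2 - 1) * as_) *: \1)%VF.
suff : v \in lker L.
  by rewrite memv_ker /L !lfun_simp /= ?id_lfunE subr_eq0 => /eqP.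
have : v \in sum_pred d U2 (fun _ => true) by rewrite D2full memvf.
apply: sp_in => i u id _ uU.
rewrite memv_ker /L !lfun_simp /= ?id_lfunE.
change (q ^+ 2 *: As (Ki u) - Ki (As u) - ((q ^+ 2 - 1) * as_) *: u == 0).
rewrite subr_eq0; apply/eqP.
have hw := D2shiftB id uU; set w := As u - _ *: u in hw.
have Au : As u = (as_ * qpowN q d (d - i)) *: u + w by rewrite /w addrC subrK.
have Kw : Ki w = (q ^+ 2 * qpowN q d i) *: w.
  move: hw; case E: i => [|j] hw.
    by move: hw; rewrite memv0 => /eqP ->; rewrite linear0 scaler0.
  have jd : (j <= d)%N by rewrite E in id; apply: ltnW.
  by rewrite (Ki_U jd hw) -qpowNS.
rewrite (Ki_U id uU) linearZ /= Au.
have -> : Ki ((as_ * qpowN q d (d - i)) *: u + w) =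
    (as_ * qpowN q d (d - i)) *: (qpowN q d i *: u) + (q ^+ 2 * qpowN q d i) *: w.
  by rewrite linearD linearZ /= (Ki_U id uU) Kw.
apply: vec_calc.
by rewrite qpowN_rev // mulrCA (qpowNK q0) mulr1.
Qed.


Lemma q2nz : q ^+ 2 != 0. Proof. exact: expf_neq0. Qed.

Lemma step_out (f g : 'End(V)) (E : nat -> {vspace V}) (t : nat -> K) :
  standard_ordering f g d E ->
  (forall i, (i <= d)%N -> E i = passmx.leigenspace f (t i)) ->
  forall c w, q ^+ 2 *: f w = c *: w -> (forall j, (j <= d)%N -> c != q ^+ 2 * t j) -> w = 0.
Proof.
move=> SOE HE c w h hc; apply/eqP; apply/negP => wnz.
have fw : f w = (q ^- 2 * c) *: w.
  by apply: (scalerI q2nz); rewrite h scalerA mulrA mulfV ?q2nz // mul1r.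
have [j jd e] := eig_exh SOE HE fw (introN idP wnz).
by move/negP: (hc j jd); apply; rewrite -e mulrA mulfV ?q2nz // mul1r.
Qed.

Lemma E1 i x : (i <= d)%N -> x \in Vs i -> Ks x - qpowN q d i *: x \in prevU Vs i.
Proof.
move=> id xV; have Ax := eigEv HVs id xV.
set w := Ks x - _ *: x.
have h : q ^+ 2 *: A w = (a * qpow q d i) *: w.
  have r := R1 x; rewrite Ax linearZ /= in r.
  move/eqP: r; rewrite subr_eq => /eqP r.
  rewrite /w linearB linearZ /= Ax scalerBr r !scalerBr.
  by apply: vec_calc2; rewrite mulrCA (qpowNK q0) mulr1.
move: h; case E: i => [|j] h /=.
  rewrite memv0; apply/eqP; apply: (step_out SO HVs h) => j jd; apply/negP => /eqP e.
  have : a * qpow q d 0 = a * qpow q d j.+1 by rewrite (qpowS q0) mulrCA -e.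
  by move/thinj.
have jd : (j <= d)%N by rewrite E in id; apply: ltnW.
apply: (memEv HVs jd); apply: (scalerI q2nz); rewrite h scalerA (qpowS q0) mulrCA //.
Qed.

Lemma E2 i x : (i <= d)%N -> x \in Vss i -> Ki x - qpow q d i *: x \in nextU d Vss i.
Proof.
move=> id xV; have Ax := eigEv HVss id xV.
set w := Ki x - _ *: x.
have h : q ^+ 2 *: As w = (as_ * qpowN q d i) *: w.
  have r := R2 x; rewrite Ax linearZ /= in r.
  move/eqP: r; rewrite subr_eq => /eqP r.
  rewrite /w linearB linearZ /= Ax scalerBr r !scalerBr.
  by apply: vec_calc2; rewrite mulrCA [qpow _ _ _ * _]mulrC (qpowNK q0) mulr1.
rewrite /nextU; case: ifP => idd.
  apply: (memEv HVss idd); apply: (scalerI q2nz); rewrite h scalerA (qpowNS q0) mulrCA //.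
rewrite memv0; apply/eqP; apply: (step_out SOs HVss h) => j jd; apply/negP => /eqP e.
have : as_ * qpowN q d i.+1 = as_ * qpowN q d j.
  by apply: (mulfI q2nz); rewrite -e [in RHS](qpowNS q0) mulrCA.
by move/thsinj => ij; move: idd; rewrite ij jd.
Qed.


Lemma Ks_Vs_in (P : pred nat) k y : (k <= d)%N -> y \in Vs k -> P k ->
  ((0 < k)%N -> P k.-1) -> Ks y \in sum_pred d Vs P.
Proof.
move=> kd yV Pk Pk1; have h := E1 kd yV.
have -> : Ks y = (Ks y - qpowN q d k *: y) + qpowN q d k *: y by rewrite subrK.
apply: rpredD; last by apply: rpredZ; exact: (sp_mem kd Pk yV).
move: h; case: k kd yV Pk Pk1 => [|k] kd yV Pk Pk1 /=; first exact: mem0_any.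
by move=> h; apply: (sp_mem (ltnW kd) (Pk1 isT) h).
Qed.

Lemma Ks_Vs_sp (P Q : pred nat) x :
  (forall k, (k <= d)%N -> P k -> Q k && ((0 < k)%N ==> Q k.-1)) ->
  x \in sum_pred d Vs P -> Ks x \in sum_pred d Vs Q.
Proof.
move=> H; apply: sp_img => k y kd Pk yV; have /andP [Qk Qk1] := H k kd Pk.
by apply: (Ks_Vs_in kd yV Qk) => k0; move/implyP: Qk1; apply.
Qed.

Lemma Ki_Vss_in (P : pred nat) k y : (k <= d)%N -> y \in Vss k -> P k ->
  ((k < d)%N -> P k.+1) -> Ki y \in sum_pred d Vss P.
Proof.
move=> kd yV Pk Pk1; have h := E2 kd yV.
have -> : Ki y = (Ki y - qpow q d k *: y) + qpow q d k *: y by rewrite subrK.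
apply: rpredD; last by apply: rpredZ; exact: (sp_mem kd Pk yV).
move: h; rewrite /nextU; case: ifP => kd' h; last exact: mem0_any.
exact: (sp_mem kd' (Pk1 kd') h).
Qed.

Lemma Ki_Vss_sp (P Q : pred nat) x :
  (forall k, (k <= d)%N -> P k -> Q k && ((k < d)%N ==> Q k.+1)) ->
  x \in sum_pred d Vss P -> Ki x \in sum_pred d Vss Q.
Proof.
move=> H; apply: sp_img => k y kd Pk yV; have /andP [Qk Qk1] := H k kd Pk.
by apply: (Ki_Vss_in kd yV Qk) => k0; move/implyP: Qk1; apply.
Qed.

Lemma Ki_Vs_in (Q : pred nat) k y : (k <= d)%N -> y \in Vs k ->
  (forall j, (j <= k)%N -> Q j) -> Ki y \in sum_pred d Vs Q.
Proof.
move=> kd yV HQ.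
have : Ki y \in sum_pred d Vs (fun j => (j <= k)%N).
  apply: (inv_pres (f := Ks) (g := Ki)).
  - exact: KiK.
  - move=> z; apply: Ks_Vs_sp => j jd jk; rewrite jk /=; apply/implyP => _.
    by apply: leq_trans jk; apply: leq_pred.
  - exact: sp_mem yV.
by apply: sp_mono => j jd jk; apply: HQ.
Qed.

Lemma Ks_Vss_in (Q : pred nat) k y : (k <= d)%N -> y \in Vss k ->
  (forall j, (k <= j <= d)%N -> Q j) -> Ks y \in sum_pred d Vss Q.
Proof.
move=> kd yV HQ.
have : Ks y \in sum_pred d Vss (fun j => (k <= j)%N).
  apply: (inv_pres (f := Ki) (g := Ks)).
  - exact: KKi.
  - move=> z; apply: Ki_Vss_sp => j jd jk; rewrite jk /=; apply/implyP => _.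
    exact: leqW.
  - exact: sp_mem yV.
by apply: sp_mono => j jd jk; apply: HQ; rewrite jk jd.
Qed.

Lemma D0D2 i x : (i <= d)%N -> x \in Vs i -> Ki x - qpow q d i *: x \in sum_pred d Vs (fun j => (j < i)%N).
Proof.
move=> id xV.
have e : qpow q d i * qpowN q d i = 1 by rewrite mulrC (qpowNK q0).
rewrite (inv_diff _ e KiK); clear e.
apply: rpredZ; have := E1 id xV; case: i id xV => [|j] id xV /=.
  by rewrite memv0 => /eqP ->; rewrite linear0 mem0v.
move=> h; apply: (Ki_Vs_in (ltnW id) h) => k kj; exact: kj.
Qed.

Lemma D0sDs1 i x : (i <= d)%N -> x \in Vss i -> Ks x - qpowN q d i *: x \in sum_pred d Vss (fun j => (i < j)%N).
Proof.
move=> id xV.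
have e : qpowN q d i * qpow q d i = 1 by rewrite (qpowNK q0).
rewrite (inv_diff _ e KKi); clear e.
apply: rpredZ; have := E2 id xV; rewrite /nextU; case: ifP => idd h.
  by apply: (Ks_Vss_in idd h) => j /andP [h1 _].
by move: h; rewrite memv0 => /eqP ->; rewrite linear0 mem0v.
Qed.


Notation U1 := (UU Tl Su).
Notation U3 := (UU Th Su).
Notation U4 := (UU Tl Sd).

Ltac nlia := repeat (apply/andP; split); lia.

Lemma C1a i x : (i <= d)%N -> x \in U1 i -> Ks x \in sum_pred d U1 (fun j => (i <= j.+1)%N).
Proof.
move=> id; rewrite memv_cap => /andP [_ xS].
have h : Ks x \in Su i.-1.
  move: xS; rewrite /= !range_sumE; apply: Ks_Vs_sp => k kd /andP [h1 h2].
  apply/andP; split; first nlia.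
  by apply/implyP => _; nlia.
have := D1flagS (leq_trans (leq_pred i) id) h.
by apply: sp_mono => k kd hk; lia.
Qed.

Lemma C1b i x : (i <= d)%N -> x \in U1 i -> Ki x \in sum_pred d U1 (fun j => (j <= i.+1)%N).
Proof.
move=> id; rewrite memv_cap => /andP [xT _].
have [idd|idd] := ltnP i d.
  have h : Ki x \in Tl i.+1.
    move: xT; rewrite /= !range_sumE; apply: Ki_Vss_sp => k kd /andP [h1 h2].
    apply/andP; split; first nlia.
    by apply/implyP => _; nlia.
  have := D1flagT idd h.
  by apply: sp_mono => k kd hk; lia.
have : Ki x \in sum_pred d U1 (fun _ => true) by rewrite D1full memvf.
by apply: sp_mono => k kd _; lia.
Qed.

Lemma C4a i x : (i <= d)%N -> x \in U4 i ->
  Ks x - qpow q d i *: x \in sum_pred d U4 (fun j => (i < j)%N).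
Proof.
move=> id; rewrite memv_cap => /andP [_ xS].
have h : Ks x - qpow q d i *: x \in sum_pred d Vs (fun j => (j < d - i)%N).
  move: xS; rewrite /= !range_sumE; apply: sp_imgB => k y kd /andP [_ kdi] yV.
  have [ke|kne] := eqVneq k (d - i)%N.
    have := E1 kd yV; rewrite ke (qpowN_rev q0 id).
    case E: (d - i)%N => [|k'] /=; first exact: mem0_any.
    by move=> h; apply: (sp_mem (j := k')) => //; lia.
  have kl : (k < d - i)%N by rewrite ltn_neqAle kne kdi.
  apply: rpredB; last by apply: rpredZ; apply: (sp_mem kd) yV.
  apply: (Ks_Vs_in kd yV) => //; lia.
have [idd|idd] := ltnP i d.
  have h' : Ks x - qpow q d i *: x \in Sd i.+1.
    move: h; rewrite /= range_sumE; apply: sp_mono => k kd hk; nlia.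
  have := D4flagS idd h'.
  by apply: sp_mono => k kd hk; lia.
move/sp_emptyW: h; apply => k kd; apply/negP => hk; lia.
Qed.

Lemma C4b i x : (i <= d)%N -> x \in U4 i ->
  Ki x - qpowN q d i *: x \in nextU d U4 i.
Proof.
move=> id; rewrite memv_cap => /andP [xT xS].
have h : Ki x - qpowN q d i *: x \in sum_pred d Vs (fun j => (j < d - i)%N).
  move: xS; rewrite /= !range_sumE; apply: sp_imgB => k y kd /andP [_ kdi] yV.
  have [ke|kne] := eqVneq k (d - i)%N.
    have := D0D2 kd yV; rewrite ke (qpow_rev q0 id).
    by [].
  have kl : (k < d - i)%N by rewrite ltn_neqAle kne kdi.
  apply: rpredB; last by apply: rpredZ; apply: (sp_mem kd) yV.
  by apply: (Ki_Vs_in kd yV) => j jk; lia.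
rewrite /nextU; case: ifP => idd; last first.
  move/sp_emptyW: h; apply => k kd; apply/negP => hk.
  by move/negbT: idd; rewrite -leqNgt => di; lia.
rewrite memv_cap; apply/andP; split.
  apply: rpredB; last first.
    by apply: rpredZ; move: xT; rewrite /= !range_sumE; apply: sp_mono => k kd hk; nlia.
  move: xT; rewrite /= !range_sumE; apply: Ki_Vss_sp => k kd /andP [h1 h2].
  apply/andP; split; first nlia.
  by apply/implyP => _; nlia.
by move: h; rewrite /= range_sumE; apply: sp_mono => k kd hk; nlia.
Qed.


Lemma C3a i x : (i <= d)%N -> x \in U3 i ->
  Ks x - qpow q d i *: x \in prevU U3 i.
Proof.
move=> id; rewrite memv_cap => /andP [xT xS].
have hY : Ks x - qpow q d i *: x \in sum_pred d Vss (fun j => (d - i < j)%N).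
  move: xT; rewrite /= !range_sumE; apply: sp_imgB => k y kd /andP [kdi _] yV.
  have [ke|kne] := eqVneq k (d - i)%N.
    by have := D0sDs1 kd yV; rewrite ke (qpowN_rev q0 id).
  apply: rpredB.
    by apply: (Ks_Vss_in kd yV) => j /andP [h1 h2]; lia.
  by apply: rpredZ; apply: (sp_mem kd) yV; lia.
have hZ : Ks x - qpow q d i *: x \in Su i.-1.
  rewrite /= range_sumE; apply: rpredB.
    move: xS; rewrite /= range_sumE; apply: Ks_Vs_sp => k kd /andP [h1 h2].
    apply/andP; split; first nlia.
    by apply/implyP => _; nlia.
  by apply: rpredZ; move: xS; rewrite /= range_sumE; apply: sp_mono => k kd hk; nlia.
case: i id xT xS hY hZ => [|j] id xT xS hY hZ /=.
  by move/sp_emptyW: hY; apply => k kd; apply/negP => hk; lia.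
rewrite memv_cap hZ andbT.
by move: hY; rewrite range_sumE; apply: sp_mono => k kd hk; nlia.
Qed.

Lemma C3b i x : (i <= d)%N -> x \in U3 i ->
  Ki x - qpowN q d i *: x \in sum_pred d U3 (fun j => (j < i)%N).
Proof.
move=> id; rewrite memv_cap => /andP [xT xS].
have hY : Ki x - qpowN q d i *: x \in sum_pred d Vss (fun j => (d - i < j)%N).
  move: xT; rewrite /= !range_sumE; apply: sp_imgB => k y kd /andP [kdi _] yV.
  have [ke|kne] := eqVneq k (d - i)%N.
    have := E2 kd yV; rewrite ke (qpow_rev q0 id) /nextU.
    case: ifP => h1 h2; last exact: mem0_any.
    by apply: (sp_mem h1) h2; lia.
  apply: rpredB.
    by apply: (Ki_Vss_in kd yV); lia.
  by apply: rpredZ; apply: (sp_mem kd) yV; lia.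
case: i id xT xS hY => [|j] id xT xS hY.
  by move/sp_emptyW: hY; apply => k kd; apply/negP => hk; lia.
have hT : Ki x - qpowN q d j.+1 *: x \in Th j.
  by move: hY; rewrite /= range_sumE; apply: sp_mono => k kd hk; nlia.
have := D3flagT (ltnW id) hT.
by apply: sp_mono => k kd hk; lia.
Qed.


Local Open Scope vspace_scope.

Lemma main_all :
  let Ksi := (Ks^-1)%VF in
  let I := (\1)%VF in
  (
  (forall i, (i <= d)%N -> let U := dec_0D d Vs Vss in
     ((Ks - qpowN q d i *: I) @: U i <= prevU U i)%VS /\
     ((Ksi - qpow q d i *: I) @: U i <= sum_pred d U (fun j => (j < i)%N))%VS) /\
  (forall i, (i <= d)%N -> let U := dec_0sDs d Vs Vss in
     ((Ks - qpowN q d i *: I) @: U i <= sum_pred d U (fun j => (i < j)%N))%VS /\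
     ((Ksi - qpow q d i *: I) @: U i <= nextU d U i)%VS) /\
  (forall i, (i <= d)%N -> let U := dec_0sD d Vs Vss in
     (Ks @: U i <= sum_pred d U (fun j => (i <= j.+1)%N))%VS /\
     (Ksi @: U i <= sum_pred d U (fun j => (j <= i.+1)%N))%VS) /\
  (forall i, (i <= d)%N -> let U := dec_0s0 d Vs Vss in
     ((Ks - qpow q d i *: I) @: U i <= sum_pred d U (fun j => (i < j)%N))%VS /\
     ((Ksi - qpowN q d i *: I) @: U i <= nextU d U i)%VS) /\
  (forall i, (i <= d)%N -> let U := dec_Ds0 d Vs Vss in
     (Ks - qpow q d i *: I) @: U i = 0%VS /\
     (Ksi - qpowN q d i *: I) @: U i = 0%VS) /\
  (forall i, (i <= d)%N -> let U := dec_DsD d Vs Vss in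
     ((Ks - qpow q d i *: I) @: U i <= prevU U i)%VS /\
     ((Ksi - qpowN q d i *: I) @: U i <= sum_pred d U (fun j => (j < i)%N))%VS)).
Proof.
move=> Ksi I; rewrite /Ksi /I.
split; [|split; [|split; [|split; [|split]]]] => i id /=.
- split; apply: img_sub_form => x xU; [exact: E1 | exact: D0D2].
- split; apply: img_sub_form => x xU; [exact: D0sDs1 | exact: E2].
- split; apply: img_elem => x xU; [exact: C1a | exact: C1b].
- split; apply: img_sub_form => x xU; [exact: C4a | exact: C4b].
- split; apply/eqP; rewrite -subv0; apply: img_sub_form => x xU.
    by rewrite (Ks_U id xU) subrr mem0v.
  by rewrite (Ki_U id xU) subrr mem0v.
- split; apply: img_sub_form => x xU; [exact: C3a | exact: C3b].
Qed.

End Main.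

Unset Implicit Arguments.
Local Open Scope ring_scope.
Local Open Scope vspace_scope.

Theorem theorem11p2 (K : closedFieldType) (q : K) (V : vectType K)
  (A As : 'End(V)) (d : nat) (Vs Vss : nat -> {vspace V}) (a as_ : K)
  (Ks : 'End(V)) :
  q != 0%R -> (forall n : nat, (0 < n)%N -> q ^+ n != 1%R) ->
  TD_pair A As ->
  standard_ordering A As d Vs -> standard_ordering As A d Vss ->
  a != 0%R -> as_ != 0%R ->
  (forall i, (i <= d)%N -> Vs i = passmx.leigenspace A (a * qpow q d i)) ->
  (forall i, (i <= d)%N -> Vss i = passmx.leigenspace As (as_ * qpowN q d i)) ->
  (forall i, (i <= d)%N -> forall v, v \in dec_Ds0 d Vs Vss i ->
     Ks v = qpow q d i *: v) ->
  let Ksi := (Ks^-1)%VF in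
  let I := (\1)%VF in
  (
  (* [0D] *)
  (forall i, (i <= d)%N -> let U := dec_0D d Vs Vss in
     ((Ks - qpowN q d i *: I) @: U i <= prevU U i)%VS /\
     ((Ksi - qpow q d i *: I) @: U i <= sum_pred d U (fun j => (j < i)%N))%VS) /\
  (* [0*D*] *)
  (forall i, (i <= d)%N -> let U := dec_0sDs d Vs Vss in
     ((Ks - qpowN q d i *: I) @: U i <= sum_pred d U (fun j => (i < j)%N))%VS /\
     ((Ksi - qpow q d i *: I) @: U i <= nextU d U i)%VS) /\
  (* [0*D] *)
  (forall i, (i <= d)%N -> let U := dec_0sD d Vs Vss in
     (Ks @: U i <= sum_pred d U (fun j => (i <= j.+1)%N))%VS /\
     (Ksi @: U i <= sum_pred d U (fun j => (j <= i.+1)%N))%VS) /\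
  (* [0*0] *)
  (forall i, (i <= d)%N -> let U := dec_0s0 d Vs Vss in
     ((Ks - qpow q d i *: I) @: U i <= sum_pred d U (fun j => (i < j)%N))%VS /\
     ((Ksi - qpowN q d i *: I) @: U i <= nextU d U i)%VS) /\
  (* [D*0] *)
  (forall i, (i <= d)%N -> let U := dec_Ds0 d Vs Vss in
     (Ks - qpow q d i *: I) @: U i = 0%VS /\
     (Ksi - qpowN q d i *: I) @: U i = 0%VS) /\
  (* [D*D] *)
  (forall i, (i <= d)%N -> let U := dec_DsD d Vs Vss in
     ((Ks - qpow q d i *: I) @: U i <= prevU U i)%VS /\
     ((Ksi - qpowN q d i *: I) @: U i <= sum_pred d U (fun j => (j < i)%N))%VS)).
Proof.
move=> q0 qr TD SO SOs a0 as0 HVs HVss HKs.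
exact: (main_all q0 qr TD SO SOs a0 as0 HVs HVss HKs).
Qed.
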